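(* For each $b \geq 0$, define the optimisation objective \[ l_b(\rho) \defeq \frac{\frac{1}{e}(\rho^2 + b\rho + 1)}{\rho\, W_0\!\left(\frac{1}{e}(\rho^2 + b\rho + 1)\right)} \] over $\rho > \sqrt{2}$. The unique minimiser of $l_0$ is \[ \rho_0 \defeq \sqrt{1 + e^{W_0(2/e^2)+2}}. \] More generally, $l_b$ is uniquely minimised by the solution $\rho_b$ of the ordinary differential equation \[ \frac{d}{db}\rho_b = \frac{\rho_b^2}{(\rho_b^2+1)\log(\rho_b^2-1)} = \frac{\rho_b}{2\rho_b+b}\left(1 - \frac{2}{\rho_b^2 + 1}\right) > 0 \] with initial value $\rho_b\big|_{b=0} = \sqrt{1 + e^{W_0(2/e^2)+2}}$. Furthermore, the minimal value of $l_b$ satisfies \[ l_b(\rho_b) = \frac{\rho_b^2 - 1}{e \rho_b} < \frac{\rho_b}{e}. \]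
   Context: $W_0$ denotes the principal branch of the Lambert W function, i.e. for $z>-1/e$, $W_0(z)$ is the unique solution $w\in(-1,\infty)$ of $we^w=z$. *)

(* Defs.v *)
From Stdlib Require Import Reals Lra ClassicalEpsilon.
From Coquelicot Require Import Coquelicot.
Open Scope R_scope.

(* Principal branch of Lambert W: for z > -1/e, W0 z is the unique
   w in (-1, +oo) with w * exp w = z.  Defined by (classical) choice;
   its value is irrelevant outside the domain z > -1/e. *)
Definition W0 (z : R) : R :=
  epsilon (inhabits 0) (fun w => -1 < w /\ w * exp w = z).

Definition lobj (b rho : R) : R :=
  let q := (rho ^ 2 + b * rho + 1) / exp 1 in
  q / (rho * W0 q).

Definition rho0 : R := sqrt (1 + exp (W0 (2 / (exp 1) ^ 2) + 2)).

Definition unique_minimiser (b r : R) : Prop :=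
  sqrt 2 < r /\ forall s, sqrt 2 < s -> s <> r -> lobj b r < lobj b s.

(* Main.v *)
Require Import Defs.
From Stdlib Require Import Reals Lra Psatz ClassicalEpsilon.
From Coquelicot Require Import Coquelicot.
Open Scope R_scope.

Lemma P_strict x y : 0 <= x -> x < y -> x * exp x < y * exp y.
Proof.
  intros Hx Hxy. pose proof (exp_increasing _ _ Hxy). pose proof (exp_pos x). nra.
Qed.

Lemma P_pos_inv w : w * exp w > 0 -> 0 < w.
Proof.
  intros H. pose proof (exp_pos w). destruct (Rle_or_lt w 0); [nra|lra].
Qed.

Lemma W0_eq w : 0 < w -> W0 (w * exp w) = w.
Proof.
  intros Hw. unfold W0.
  assert (Hex : exists w', -1 < w' /\ w' * exp w' = w * exp w) by (exists w; split; [lra|reflexivity]).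
  destruct (epsilon_spec (inhabits 0) _ Hex) as [_ H].
  set (w' := epsilon _ _) in *.
  pose proof (exp_pos w).
  assert (Hw' : 0 < w') by (apply P_pos_inv; rewrite H; nra).
  destruct (Rtotal_order w' w) as [Hl|[He|Hl]]; auto.
  - pose proof (P_strict w' w ltac:(lra) Hl); lra.
  - pose proof (P_strict w w' ltac:(lra) Hl); lra.
Qed.

Lemma W0_spec z : 0 < z -> 0 < W0 z /\ W0 z * exp (W0 z) = z.
Proof.
  intros Hz.
  assert (Hc : continuity (fun x => x * exp x)).
  { apply continuity_mult; [apply derivable_continuous, derivable_id | apply derivable_continuous, derivable_exp]. }
  pose proof (exp_ineq1_le z).
  assert (H1: Rmin (0 * exp 0) (z * exp z) <= z <= Rmax (0 * exp 0) (z * exp z)).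
  { rewrite Rmin_left, Rmax_right; nra. }
  destruct (IVT_gen _ 0 z z Hc H1) as [w [_ Hw]].
  assert (0 < w) by (apply P_pos_inv; lra).
  rewrite <- Hw, W0_eq; auto.
Qed.

Lemma ln_le_sub1 t : 0 < t -> ln t <= t - 1.
Proof.
  intros Ht. pose proof (exp_ineq1_le (ln t)). rewrite exp_ln in H; lra.
Qed.

Definition F (x : R) : R := (x^2 - 1) * ln (x^2 - 1) / x - 2 * x.
Definition dF (x : R) : R := (x^2 + 1) * ln (x^2 - 1) / x^2.

Lemma F_deriv x : 1 < x -> is_derive F x (dF x).
Proof.
  intros Hx. unfold F, dF.
  auto_derive.
  - repeat split; nra.
  - assert (x^2 - 1 <> 0) by nra. replace (x * (x * 1) + - (1)) with (x^2 - 1) by ring. field. split; [lra|auto].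
Qed.

Lemma F_cont x : 1 < x -> continuity_pt F x.
Proof.
  intros Hx. apply derivable_continuous_pt. exists (dF x).
  apply is_derive_Reals, F_deriv; auto.
Qed.

Lemma sqrt2_gt1 : 1 < sqrt 2.
Proof.
  rewrite <- sqrt_1. apply sqrt_lt_1; lra.
Qed.

Lemma sqrt2_sq : sqrt 2 ^ 2 = 2.
Proof. apply pow2_sqrt; lra. Qed.

Lemma dF_nonneg x : sqrt 2 <= x -> 0 <= dF x.
Proof.
  intros Hx. pose proof sqrt2_gt1. pose proof sqrt2_sq.
  assert (2 <= x^2) by nra.
  assert (0 <= ln (x^2 - 1)).
  { rewrite <- ln_1. apply ln_le; lra. }
  unfold dF. apply Rmult_le_pos; [nra|]. apply Rlt_le, Rinv_0_lt_compat; nra.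
Qed.

Lemma dF_pos x : sqrt 2 < x -> 0 < dF x.
Proof.
  intros Hx. pose proof sqrt2_gt1. pose proof sqrt2_sq.
  assert (2 < x^2) by nra.
  assert (0 < ln (x^2 - 1)).
  { rewrite <- ln_1. apply ln_increasing; lra. }
  unfold dF. apply Rmult_lt_0_compat; [nra|]. apply Rinv_0_lt_compat; nra.
Qed.

Lemma F_mvt x y : sqrt 2 <= x -> x < y -> exists c, x <= c <= y /\ F y - F x = dF c * (y - x).
Proof.
  intros Hx Hxy. pose proof sqrt2_gt1.
  destruct (MVT_gen F x y dF) as [c [Hc Hm]].
  - intros z Hz. rewrite Rmin_left, Rmax_right in Hz by lra. apply F_deriv; lra.
  - intros z Hz. rewrite Rmin_left, Rmax_right in Hz by lra. apply F_cont; lra.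
  - rewrite Rmin_left, Rmax_right in Hc by lra. exists c; auto.
Qed.

Lemma F_le x y : sqrt 2 <= x -> x <= y -> F x <= F y.
Proof.
  intros Hx Hxy. destruct (Req_dec x y) as [->|Hne]; [lra|].
  destruct (F_mvt x y Hx ltac:(lra)) as [c [Hc Hm]].
  pose proof (dF_nonneg c ltac:(lra)). nra.
Qed.

Lemma F_lt x y : sqrt 2 <= x -> x < y -> F x < F y.
Proof.
  intros Hx Hxy.
  set (m := (x + y) / 2).
  destruct (F_mvt m y ltac:(unfold m; lra) ltac:(unfold m; lra)) as [c [Hc Hm]].
  pose proof (dF_pos c ltac:(unfold m in Hc; lra)).
  pose proof (F_le x m Hx ltac:(unfold m; lra)).
  assert (0 < dF c * (y - m)) by (apply Rmult_lt_0_compat; unfold m; lra).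
  lra.
Qed.

Lemma F_sqrt2 : F (sqrt 2) = - 2 * sqrt 2.
Proof.
  unfold F. rewrite sqrt2_sq. replace (2 - 1) with 1 by lra. rewrite ln_1. 
  pose proof sqrt2_gt1. field. lra.
Qed.

Lemma F_large b : exists M, sqrt 2 < M /\ b < F M.
Proof.
  set (s := sqrt (exp 3 + 1)).
  pose proof (exp_pos 3).
  assert (Hs2 : s ^ 2 = exp 3 + 1) by (apply pow2_sqrt; lra).
  assert (Hs0 : 0 <= s) by apply sqrt_pos.
  set (M := s + Rabs b + 3).
  pose proof (Rabs_pos b). pose proof (Rle_abs b).
  pose proof sqrt2_gt1. pose proof sqrt2_sq.
  assert (HM : 3 <= M) by (unfold M; lra).
  assert (HM2 : exp 3 <= M^2 - 1) by (unfold M; nra).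
  assert (HL : 3 <= ln (M^2 - 1)).
  { rewrite <- (ln_exp 3). apply ln_le; lra. }
  exists M. split.
  - nra.
  - unfold F.
    assert (3 * (M^2 - 1) <= (M ^ 2 - 1) * ln (M ^ 2 - 1)) by nra.
    assert (3 * (M^2 - 1) / M <= (M ^ 2 - 1) * ln (M ^ 2 - 1) / M).
    { unfold Rdiv. apply Rmult_le_compat_r; [apply Rlt_le, Rinv_0_lt_compat; lra| lra]. }
    assert (3 * (M^2-1) / M - 2 * M = M - 3 / M) by (field; lra).
    assert (3 / M <= 1) by (apply Rmult_le_reg_r with M; [lra|]; unfold Rdiv; rewrite Rmult_assoc, Rinv_l; lra).
    unfold M in *. lra.
Qed.

Lemma F_exists b : - 2 * sqrt 2 < b -> exists r, sqrt 2 < r /\ F r = b.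
Proof.
  intros Hb. destruct (F_large b) as [M [HM HbM]].
  pose proof sqrt2_gt1.
  destruct (Ranalysis5.IVT_interv (fun x => F x - b) (sqrt 2) M) as [r [Hr Hf]].
  - intros a Ha. apply continuity_pt_minus; [apply F_cont; lra| apply continuity_pt_const; intros ? ?; reflexivity].
  - auto.
  - rewrite F_sqrt2; lra.
  - lra.
  - exists r. split; [|lra].
    destruct (Req_dec r (sqrt 2)) as [->|]; [rewrite F_sqrt2 in Hf; lra| lra].
Qed.

Definition rhoF (b : R) : R := epsilon (inhabits 0) (fun r => sqrt 2 < r /\ F r = b).

Lemma rhoF_spec b : - 2 * sqrt 2 < b -> sqrt 2 < rhoF b /\ F (rhoF b) = b.
Proof.
  intros Hb. unfold rhoF. apply epsilon_spec, F_exists; auto.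
Qed.

Lemma F_inj x y : sqrt 2 <= x -> sqrt 2 <= y -> F x = F y -> x = y.
Proof.
  intros Hx Hy H. destruct (Rtotal_order x y) as [Hl|[He|Hl]]; auto.
  - pose proof (F_lt x y Hx Hl); lra.
  - pose proof (F_lt y x Hy Hl); lra.
Qed.

Lemma rhoF_unique b r : sqrt 2 < r -> F r = b -> rhoF b = r.
Proof.
  intros Hr Hf. assert (Hb : - 2 * sqrt 2 < b).
  { rewrite <- Hf, <- F_sqrt2. apply F_lt; lra. }
  destruct (rhoF_spec b Hb) as [H1 H2]. apply F_inj; lra.
Qed.

Lemma rhoF_le y1 y2 : - 2 * sqrt 2 < y1 -> y1 <= y2 -> rhoF y1 <= rhoF y2.
Proof.
  intros H1 H12. destruct (rhoF_spec y1 H1) as [A1 B1].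
  destruct (rhoF_spec y2 ltac:(lra)) as [A2 B2].
  destruct (Rle_or_lt (rhoF y1) (rhoF y2)); auto.
  pose proof (F_lt (rhoF y2) (rhoF y1) ltac:(lra) H). lra.
Qed.

Lemma rhoF_cont y : - 2 * sqrt 2 < y -> continuity_pt rhoF y.
Proof.
  intros Hy. destruct (rhoF_spec y Hy) as [A B].
  intros eps Heps.
  set (x0 := rhoF y) in *.
  set (e := Rmin eps ((x0 - sqrt 2) / 2)).
  assert (He : 0 < e) by (apply Rmin_pos; lra).
  assert (He1 : e <= eps) by apply Rmin_l.
  assert (He2 : e <= (x0 - sqrt 2) / 2) by apply Rmin_r.
  pose proof (F_lt (x0 - e) x0 ltac:(lra) ltac:(lra)) as Ha.
  pose proof (F_lt x0 (x0 + e) ltac:(lra) ltac:(lra)) as Hc.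
  pose proof (F_lt (sqrt 2) (x0 - e) ltac:(lra) ltac:(lra)) as Hs. rewrite F_sqrt2 in Hs.
  exists (Rmin (y - F (x0 - e)) (F (x0 + e) - y)). split.
  - apply Rmin_pos; lra.
  - intros y' [_ Hd]. unfold R_dist in *.
    pose proof (Rmin_l (y - F (x0 - e)) (F (x0 + e) - y)).
    pose proof (Rmin_r (y - F (x0 - e)) (F (x0 + e) - y)).
    apply Rabs_def2 in Hd. destruct Hd as [Hd1 Hd2].
    destruct (rhoF_spec y' ltac:(lra)) as [A' B'].
    assert (x0 - e < rhoF y').
    { destruct (Rle_or_lt (rhoF y') (x0 - e)); auto.
      pose proof (F_le (rhoF y') (x0 - e) ltac:(lra) H1). lra. }
    assert (rhoF y' < x0 + e).
    { destruct (Rle_or_lt (x0 + e) (rhoF y')); auto.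
      pose proof (F_le (x0 + e) (rhoF y') ltac:(lra) H2). lra. }
    apply Rabs_def1; lra.
Qed.

Lemma rhoF_deriv y : - 2 * sqrt 2 < y -> derivable_pt_lim rhoF y (1 / dF (rhoF y)).
Proof.
  intros Hy.
  set (h := (y + 2 * sqrt 2) / 2).
  assert (Hh : 0 < h) by (unfold h; lra).
  assert (Hlb : - 2 * sqrt 2 < y - h) by (unfold h; lra).
  destruct (rhoF_spec (y - h) Hlb) as [Alb Blb].
  assert (Prf : forall a, rhoF (y - h) <= a <= rhoF (y + h) -> derivable_pt F a).
  { intros a Ha. exists (dF a). apply is_derive_Reals, F_deriv. pose proof sqrt2_gt1. lra. }
  assert (Hincr : rhoF (y - h) <= rhoF y <= rhoF (y + h)).
  { split; apply rhoF_le; lra. }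
  pose proof (Ranalysis5.derivable_pt_lim_recip_interv F rhoF (y - h) (y + h) y Prf (rhoF_cont y Hy)
     ltac:(lra) ltac:(lra) Hincr) as HH.
  rewrite (derive_pt_eq_0 F (rhoF y) (dF (rhoF y)) (Prf (rhoF y) Hincr)) in HH.
  - apply HH.
    + intros x Hx. unfold comp, id. apply rhoF_spec. lra.
    + pose proof (dF_pos (rhoF y) ltac:(apply rhoF_spec; lra)). lra.
  - apply is_derive_Reals, F_deriv. pose proof sqrt2_gt1. pose proof (proj1 (rhoF_spec y Hy)). lra.
Qed.

Lemma key_min b r : 0 <= b -> sqrt 2 < r -> F r = b ->
  unique_minimiser b r /\ lobj b r = (r ^ 2 - 1) / (exp 1 * r).
Proof.
  intros Hb Hr HF.
  pose proof sqrt2_gt1. pose proof sqrt2_sq.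
  assert (Hr2 : 2 < r^2) by nra.
  set (L := ln (r^2 - 1)).
  assert (HG : (r^2 - 1) * (L - 1) = r^2 + b * r + 1).
  { rewrite <- HF. unfold F, L. field. lra. }
  assert (HL1 : 0 < L - 1).
  { destruct (Rle_or_lt (L - 1) 0); auto. nra. }
  pose proof (exp_pos 1) as He.
  assert (HeL : exp (L - 1) = (r^2 - 1) / exp 1).
  { unfold Rminus at 1. rewrite exp_plus, exp_Ropp. unfold L. rewrite exp_ln by lra. reflexivity. }
  assert (Hq : (r^2 + b * r + 1) / exp 1 = (L - 1) * exp (L - 1)).
  { rewrite HeL, <- HG. field. lra. }
  assert (Hval : lobj b r = (r ^ 2 - 1) / (exp 1 * r)).
  { unfold lobj. cbv zeta. rewrite Hq, W0_eq by auto. rewrite HeL. field. lra. }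
  split; [|exact Hval].
  split; [exact Hr|].
  intros s Hs Hsr. rewrite Hval.
  set (qs := (s^2 + b*s + 1) / exp 1).
  assert (Hqs : 0 < qs).
  { unfold qs. apply Rdiv_lt_0_compat; [nra|lra]. }
  destruct (W0_spec qs Hqs) as [Hw Hwe].
  set (w := W0 qs) in *.
  assert (Hl : lobj b s = exp w / s).
  { unfold lobj. cbv zeta. fold qs. fold w. rewrite <- Hwe at 1. field. lra. }
  rewrite Hl.
  set (lam := (r^2 - 1) / (exp 1 * r)).
  assert (Hlam : 0 < lam) by (unfold lam; apply Rdiv_lt_0_compat; nra).
  destruct (Rlt_or_le (lam) (exp w / s)) as [Hok|Hbad]; [exact Hok|].
  exfalso.
  set (t := s / r).
  assert (Ht : 0 < t) by (unfold t; apply Rdiv_lt_0_compat; lra).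
  assert (Hsr' : s = t * r) by (unfold t; field; lra).
  assert (Ht1 : t <> 1) by (intro E; apply Hsr; rewrite Hsr', E; ring).
  assert (Hls : lam * s = (r^2 - 1) * t / exp 1) by (unfold lam, t; field; split; lra).
  set (v := ln (lam * s)).
  assert (Hv : v = L - 1 + ln t).
  { unfold v. rewrite Hls. assert (0 < r^2 - 1) by lra. assert (0 < (r^2 - 1) * t) by (apply Rmult_lt_0_compat; lra).
    rewrite ln_div by lra. rewrite ln_mult by lra.
    rewrite ln_exp. fold L. ring. }
  assert (Hwv : w <= v).
  { destruct (Rle_or_lt w v); auto.
    pose proof (exp_increasing _ _ H1). unfold v in H2. rewrite exp_ln in H2 by nra.
    apply (Rmult_le_compat_r s) in Hbad; [|lra].
    replace (exp w / s * s) with (exp w) in Hbad by (field; lra). lra. }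
  assert (HP : qs <= v * exp v).
  { destruct (Req_dec w v) as [<-|Hne]; [lra|].
    pose proof (P_strict w v ltac:(lra) ltac:(lra)). lra. }
  unfold v in HP at 2. rewrite exp_ln in HP by nra. fold v in HP.
  rewrite Hls, Hv in HP. unfold qs in HP.
  assert (HP2 : s^2 + b*s + 1 <= (L - 1 + ln t) * ((r^2 - 1) * t)).
  { apply (Rmult_le_compat_r (exp 1)) in HP; [|lra].
    replace ((s ^ 2 + b * s + 1) / exp 1 * exp 1) with (s ^ 2 + b * s + 1) in HP by (field; lra).
    replace ((L - 1 + ln t) * ((r ^ 2 - 1) * t / exp 1) * exp 1) with ((L - 1 + ln t) * ((r ^ 2 - 1) * t)) in HP by (field; lra).
    exact HP. }
  pose proof (ln_le_sub1 t Ht) as Hln.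
  assert (Hk : ln t * ((r^2 - 1) * t) <= (t - 1) * ((r^2 - 1) * t)).
  { apply Rmult_le_compat_r; [nra|lra]. }
  assert (Hbs : b * s = t * ((r^2 - 1) * (L - 1) - r^2 - 1)).
  { rewrite Hsr'. replace (b * (t * r)) with (t * (b * r)) by ring. f_equal. lra. }
  assert (Hsq : 0 < (t - 1)^2).
  { assert (t - 1 <> 0) by lra. nra. }
  assert (Hid : s^2 + b*s + 1 - (L - 1 + (t - 1)) * ((r^2 - 1) * t) = (t - 1)^2).
  { rewrite Hbs, Hsr'. ring. }
  nra.
Qed.

Lemma rho0_facts : sqrt 2 < rho0 /\ F rho0 = 0.
Proof.
  pose proof (exp_pos 1) as He.
  assert (Hz : 0 < 2 / exp 1 ^ 2) by (apply Rdiv_lt_0_compat; [lra| apply pow_lt; lra]).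
  destruct (W0_spec _ Hz) as [Hu Hue].
  unfold rho0. set (u := W0 (2 / exp 1 ^ 2)) in *.
  assert (H2 : exp (u + 2) = exp u * exp 1 ^ 2).
  { rewrite exp_plus. replace 2 with (1 + 1) by ring. rewrite exp_plus. ring. }
  assert (Hgt : 1 < exp (u + 2)).
  { rewrite <- exp_0. apply exp_increasing; lra. }
  assert (Hs2 : sqrt (1 + exp (u + 2)) ^ 2 = 1 + exp (u + 2)) by (apply pow2_sqrt; lra).
  pose proof (sqrt_pos (1 + exp (u + 2))).
  split.
  - apply sqrt_lt_1; lra.
  - set (r := sqrt (1 + exp (u + 2))) in *.
    assert (0 < r) by (destruct (Req_dec r 0) as [E|]; [rewrite E in Hs2; simpl in Hs2; lra| lra]).
    unfold F. rewrite Hs2. replace (1 + exp (u + 2) - 1) with (exp (u + 2)) by ring.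
    rewrite ln_exp.
    assert (Hk : u * exp (u + 2) = 2).
    { rewrite H2, <- Rmult_assoc, Hue. field. lra. }
    apply Rmult_eq_reg_r with r; [|lra].
    unfold Rdiv. rewrite Rmult_minus_distr_r, Rmult_assoc, Rinv_l by lra.
    replace (2 * r * r) with (2 * r^2) by ring. rewrite Hs2. lra.
Qed.

Theorem lemmaG2 :
  unique_minimiser 0 rho0 /\
  exists rho : R -> R,
    rho 0 = rho0 /\
    filterlim rho (at_right 0) (locally (rho 0)) /\
    (forall b, 0 < b ->
       is_derive rho b
         (rho b ^ 2 / ((rho b ^ 2 + 1) * ln (rho b ^ 2 - 1))) /\
       rho b ^ 2 / ((rho b ^ 2 + 1) * ln (rho b ^ 2 - 1))
         = rho b / (2 * rho b + b) * (1 - 2 / (rho b ^ 2 + 1)) /\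
       0 < rho b ^ 2 / ((rho b ^ 2 + 1) * ln (rho b ^ 2 - 1))) /\
    (forall b, 0 <= b ->
       unique_minimiser b (rho b) /\
       lobj b (rho b) = (rho b ^ 2 - 1) / (exp 1 * rho b) /\
       (rho b ^ 2 - 1) / (exp 1 * rho b) < rho b / exp 1).
Proof.
  destruct rho0_facts as [H0a H0b].
  pose proof sqrt2_gt1 as Hs1. pose proof sqrt2_sq as Hs2.
  split; [apply (key_min 0 rho0); lra|].
  exists rhoF.
  assert (Hr0 : rhoF 0 = rho0) by (apply rhoF_unique; auto).
  split; [exact Hr0|].
  split.
  { apply (filterlim_filter_le_1 (F := locally 0)).
    - apply filter_le_within.
    - apply continuity_pt_filterlim, rhoF_cont. lra. }
  split.
  - intros b Hb.
    destruct (rhoF_spec b ltac:(lra)) as [Ha Hf].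
    set (r := rhoF b) in *.
    assert (Hr2 : 2 < r^2) by nra.
    assert (HL : 0 < ln (r^2 - 1)) by (rewrite <- ln_1; apply ln_increasing; lra).
    assert (Hval : 1 / dF r = r ^ 2 / ((r ^ 2 + 1) * ln (r ^ 2 - 1))).
    { unfold dF. field. split; nra. }
    split; [|split].
    + apply is_derive_Reals. rewrite <- Hval. apply rhoF_deriv. lra.
    + assert (HG : (r^2 - 1) * ln (r^2 - 1) = 2 * r^2 + b * r).
      { rewrite <- Hf. unfold F. field. lra. }
      assert (Hb2 : 2 * r + b = (r^2 - 1) * ln (r^2 - 1) / r).
      { rewrite HG. field. lra. }
      rewrite Hb2. field. repeat split; nra.
    + apply Rdiv_lt_0_compat; nra.
  - intros b Hb.
    destruct (rhoF_spec b ltac:(lra)) as [Ha Hf].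
    destruct (key_min b (rhoF b) Hb Ha Hf) as [K1 K2].
    split; [exact K1|]. split; [exact K2|].
    pose proof (exp_pos 1).
    apply Rmult_lt_reg_r with (exp 1 * rhoF b); [nra|].
    field_simplify; lra.
Qed.
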